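(* Let $G$ be a finite non-abelian group. Then the non-centralizer graph $\Upsilon_G$ is not $n$-regular for any integer $n$ that is a power of a prime (i.e. $n=p^k$ with $p$ prime and $k\geq 1$).
   Context: For a finite group $G$, $C_G(x)$ denotes the centralizer of $x\in G$. The non-centralizer graph $\Upsilon_G$ is the simple graph with vertex set $G$ in which two distinct vertices $x,y$ are adjacent if and only if $C_G(x)\neq C_G(y)$. A graph is $n$-regular if every vertex has degree exactly $n$. *)

(* Defs.v *)
From mathcomp Require Import all_boot all_fingroup.
Set Implicit Arguments. Unset Strict Implicit. Unset Printing Implicit Defensive.
Local Open Scope group_scope.

Definition noncent_adj (gT : finGroupType) (G : {group gT}) (x y : gT) : bool :=
  (x != y) && ('C_G[x] != 'C_G[y]).

Definition noncent_deg (gT : finGroupType) (G : {group gT}) (x : gT) : nat :=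
  #|[set y in G | noncent_adj G x y]|.

Definition noncent_regular (gT : finGroupType) (G : {group gT}) (n : nat) : Prop :=
  forall x, x \in G -> noncent_deg G x = n.

(* Main.v *)
Require Import Defs.
From mathcomp Require Import all_boot all_fingroup.
From mathcomp Require Import all_solvable.
Set Implicit Arguments. Unset Strict Implicit. Unset Printing Implicit Defensive.

Lemma arith2 k z i : 2 %| i -> 2 ^ k + z = z * i -> 0 < z -> i = 2.
Proof.
move=> di e z0.
have i0 : 0 < i.
  rewrite lt0n; apply/eqP => i0; move: e; rewrite i0 muln0 => /eqP.
  by rewrite addn_eq0 (negbTE (lt0n_neq0 z0)) andbF.
have e2 : 2 ^ k = z * i.-1.
  by apply/eqP; rewrite -(eqn_add2r z) e -{3}(muln1 z) -mulnDr addn1 prednK.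
have d : i.-1 %| 2 ^ k by rewrite e2 dvdn_mull.
have o : odd i.-1.
  by move: di; rewrite -{1}(prednK i0) dvdn2 /= negbK.
have c : coprime i.-1 (2 ^ k) by rewrite coprimeXr // coprimen2.
move: c; rewrite /coprime (gcdn_idPl d) => /eqP h.
by rewrite -(prednK i0) h.
Qed.

Lemma arith_odd p k z i : prime p -> p != 2 -> p ^ k + z = z * i -> odd z.
Proof.
move=> pp p2 e.
have d : z %| p ^ k.
  have : z %| p ^ k + z by rewrite e dvdn_mulr.
  by rewrite dvdn_addl.
apply: (dvdn_odd d); rewrite oddX orbC.
by case: (even_prime pp) => [e2|->]; [rewrite e2 in p2 | ].
Qed.

Section Aux.
Local Open Scope group_scope.
Variables (gT : finGroupType) (G : {group gT}).

Definition Sx (x : gT) := [set y in G | 'C_G[y] == 'C_G[x]].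

Lemma deg_eq x : noncent_deg G x + #|Sx x| = #|G|.
Proof.
rewrite /noncent_deg -(cardsID (Sx x) G) addnC; congr (_ + _).
  apply: eq_card => y; rewrite !inE.
  by case: (y \in G).
apply: eq_card => y; rewrite !inE /noncent_adj.
case: (y \in G) => //=; case: eqP => [->|_]; first by rewrite eqxx.
by rewrite andbT eq_sym.
Qed.

Lemma S1 : Sx 1 = 'Z(G).
Proof.
apply/setP => y; rewrite !inE cent11T setIT.
case Gy: (y \in G) => //=.
apply/eqP/centP => [E z Gz | cy].
  have : z \in 'C_G[y] by rewrite E.
  by rewrite inE => /andP [_ /cent1P].
apply/setP => z; rewrite inE; case Gz: (z \in G) => //=.
by apply/cent1P; apply/esym; apply: cy.
Qed.

Lemma CZ x z : z \in 'Z(G) -> 'C_G[z * x] = 'C_G[x].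
Proof.
move=> /centerP [Gz cz].
apply/setP => y; rewrite !in_setI; case Gy: (y \in G) => //=.
have cyz : commute y z by apply/esym/cz.
apply/cent1P/cent1P => H.
  have -> : x = z^-1 * (z * x) by rewrite mulKg.
  by apply: commuteM => //; apply: commuteV.
by apply: commuteM.
Qed.

Lemma CV x : 'C_G[x^-1] = 'C_G[x].
Proof.
apply/setP => y; rewrite !in_setI; case Gy: (y \in G) => //=.
apply/cent1P/cent1P => H; last by apply: commuteV.
by rewrite -[x]invgK; apply: commuteV.
Qed.

Lemma main_aux :
  ~~ abelian G ->
  forall p k : nat, prime p -> (0 < k)%N -> ~ noncent_regular G (p ^ k)%N.
Proof.
move=> nab p k pp k0 reg.
set Z := 'Z(G).
have d1 := deg_eq 1; rewrite S1 (reg 1 (group1 G)) -/Z in d1.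
have ZG : Z \subset G := center_sub G.
have nZG : G \subset 'N(Z) := normal_norm (center_normal G).
have sq : forall x, x \in G -> x ^+ 2 \in Z.
  move=> x Gx; case Zx: (x \in Z); first by rewrite groupX.
  have dx := deg_eq x; rewrite (reg x Gx) in dx.
  have eS : #|Sx x| = #|Z| by apply/eqP; rewrite -(eqn_add2l (p ^ k)) dx d1.
  have sub : Z :* x \subset Sx x.
    apply/subsetP => y; case/rcosetP => z Zz ->.
    rewrite inE groupM ?Gx ?(subsetP ZG) //=.
    by rewrite CZ.
  have : Z :* x == Sx x by rewrite eqEcard sub card_rcoset eS leqnn.
  move/eqP => E.
  have : x^-1 \in Sx x by rewrite inE groupV Gx CV eqxx.
  rewrite -E mem_rcoset => H.
  have -> : x ^+ 2 = (x^-1 * x^-1)^-1 by rewrite invMg invgK.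
  by rewrite groupV.
case/subsetPn: (nab) => x Gx; rewrite -sub_cent1 => /subsetPn [y Gy nyx].
have abq : abelian (G / Z).
  apply: (abelem_abelian (p:=2)); apply: exponent2_abelem; apply/exponentP => xb.
  case/morphimP => u Nu Gu ->.
  by rewrite -(morphX _ _ Nu) /= coset_id ?sq.
have dG : G^`(1) \subset Z := der1_min nZG abq.
have cZ : [~ y, x] \in Z by apply: (subsetP dG); apply: mem_commg.
have cc : centralises [~ y, x] G by case/centerP: cZ.
have c2 : [~ y, x] ^+ 2 = 1.
  rewrite -commXg; last by apply/esym/cc.
  apply/eqP/commgP.
  by case/centerP: (sq y Gy) => _ cy2; apply: cy2.
have yZ : y \notin Z.
  by apply: contra nyx => /centerP [_ cy]; apply/cent1P; apply: cy.
have o2 : #[coset Z y] = 2.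
  apply/(prime_nt_dvdP (d:=#[coset Z y])) => //.
    rewrite order_eq1; apply: contra yZ => /eqP; apply: coset_idr.
    exact: (subsetP nZG y Gy).
  by rewrite order_dvdn -(morphX _ _ (subsetP nZG y Gy)) /= coset_id ?sq.
have di : 2 %| #|G : Z|.
  by rewrite -card_quotient // -o2 order_dvdG // mem_quotient.
have LZ := Lagrange ZG.
rewrite -LZ in d1.
have oddZ : odd #|Z|.
  case p2: (p == 2).
    exfalso; move/eqP: p2 => p2; rewrite p2 in d1.
    have i2 := arith2 di d1 (cardG_gt0 _).
    move/negP: nab; apply; apply: cyclic_center_factor_abelian.
    by apply: prime_cyclic; rewrite card_quotient // i2.
  by apply: (arith_odd pp (negbT p2) d1).
have oc : #[[~ y, x]] %| 1.
  have : #[[~ y, x]] %| gcdn 2 #|Z|.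
    by rewrite dvdn_gcd order_dvdn c2 eqxx order_dvdG.
  by move: oddZ; rewrite -coprime2n /coprime => /eqP ->.
move: oc; rewrite dvdn1 order_eq1 => /commgP cyx.
by move/negP: nyx; apply; apply/cent1P.
Qed.

End Aux.


Theorem corollary2p11 (gT : finGroupType) (G : {group gT}) :
  ~~ abelian G ->
  forall p k : nat, prime p -> 0 < k -> ~ noncent_regular G (p ^ k).
Proof. exact: main_aux. Qed.
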